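(* The existential-completion 2-monad $T^{ex}$ on $\mathbf{SD}^{exp}$ induces (by restriction) a 2-monad $\widetilde{T^{ex}}$ on $\mathbf{UD}^{exp}$; that is, for every object $P$ of $\mathbf{UD}^{exp}$, $T^{ex}(P)=P^{ex}$ is in $\mathbf{UD}^{exp}$, $T^{ex}$ sends 1-cells of $\mathbf{UD}^{exp}$ to 1-cells of $\mathbf{UD}^{exp}$, and the components at objects of $\mathbf{UD}^{exp}$ of the unit and multiplication of $T^{ex}$ are 1-cells of $\mathbf{UD}^{exp}$.
   Context: A slat-doctrine is a functor $P:\mathcal{C}^{\mathrm{op}}\to\mathbf{Pos}$ with $\mathcal{C}$ having finite products; $P_f$ is reindexing along $f$. It is existential (resp. universal) if reindexing along each product projection has a left (resp. right) adjoint satisfying Beck–Chevalley (for every pullback of a projection $\mathrm{pr}:X\to A$ along $f:A'\to A$, with resulting projection $\mathrm{pr}'$ and $f':X'\to X$, $\exists_{\mathrm{pr}'}P_{f'}=P_f\exists_{\mathrm{pr}}$, resp. $\forall_{\mathrm{pr}'}P_{f'}=P_f\forall_{\mathrm{pr}}$). The 2-category $\mathbf{SD}$: objects slat-doctrines; 1-cells $(F,b):P\to R$ with $F$ a functor between base categories and $b:P\to R\circ F^{\mathrm{op}}$ a natural transformation; 2-cells $\theta:(F,b)\Rightarrow(G,c)$ natural transformations $F\to G$ with $b_A(\alpha)\le R_{\theta_A}(c_A(\alpha))$. $\mathbf{SD}^{exp}$ is the 2-full sub-2-category of slat-doctrines whose base category has exponents, with 1-cells whose functor preserves exponents; $\mathbf{UD}^{exp}$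 is its sub-2-category of universal slat-doctrines and 1-cells preserving the universal structure (commuting with right adjoints along projections). Existential completion: $P^{ex}(A)$ is the poset (reflection) of triples $(A,B,\alpha)$, $\alpha\in P(A\times B)$, with $(A,B,\alpha)\le(A,C,\beta)$ iff some $f:A\times B\to C$ has $\alpha\le P_{\langle\mathrm{pr}_A,f\rangle}(\beta)$, and $P^{ex}_f(C,D,\gamma)=(A,D,P_{f\times 1_D}(\gamma))$. $P\mapsto P^{ex}$ extends to a 2-functor left 2-adjoint to the forgetful 2-functor from existential slat-doctrines to $\mathbf{SD}$; $T^{ex}$ denotes the induced 2-monad (considered on $\mathbf{SD}^{exp}$), with unit component $P(A)\to P^{ex}(A)$, $\alpha\mapsto(A,1,P_{\mathrm{pr}_A}\alpha)$, and multiplication component $(P^{ex})^{ex}(A)\to P^{ex}(A)$, $(A,B,x)\mapsto\exists^{ex}_{\mathrm{pr}_A}(x)$ for $x\in P^{ex}(A\times B)$. *)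

(* Defs.v *)
Record Cat := {
  ob : Type;
  hom : ob -> ob -> Type;
  idc : forall A, hom A A;
  cmp : forall A B C, hom B C -> hom A B -> hom A C;
  one : ob;
  bang : forall A, hom A one;
  prd : ob -> ob -> ob;
  p1 : forall A B, hom (prd A B) A;
  p2 : forall A B, hom (prd A B) B;
  pr : forall X A B, hom X A -> hom X B -> hom X (prd A B)
}.
Arguments hom {c} _ _.
Arguments idc {c} A.
Arguments cmp {c A B C} _ _.
Arguments one {c}.
Arguments bang {c} A.
Arguments prd {c} _ _.
Arguments p1 {c A B}.
Arguments p2 {c A B}.
Arguments pr {c X A B} _ _.

Definition fprod {C : Cat} {A A' B B' : ob C} (f : hom A A') (g : hom B B')
  : hom (prd A B) (prd A' B') := pr (cmp f p1) (cmp g p2).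

Definition IsCartCat (C : Cat) : Prop :=
  (forall (A B : ob C) (f : hom A B), cmp (idc B) f = f) /\
  (forall (A B : ob C) (f : hom A B), cmp f (idc A) = f) /\
  (forall (A B D E : ob C) (f : hom A B) (g : hom B D) (h : hom D E),
      cmp h (cmp g f) = cmp (cmp h g) f) /\
  (forall (A : ob C) (f : hom A one), f = bang A) /\
  (forall (X A B : ob C) (f : hom X A) (g : hom X B), cmp p1 (pr f g) = f) /\
  (forall (X A B : ob C) (f : hom X A) (g : hom X B), cmp p2 (pr f g) = g) /\
  (forall (X A B : ob C) (h : hom X (prd A B)), h = pr (cmp p1 h) (cmp p2 h)).

Definition IsExp {C : Cat} (B D E : ob C) (ev : hom (prd E B) D) : Prop :=
  forall A (g : hom (prd A B) D),
    exists h : hom A E,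
      cmp ev (fprod h (idc B)) = g /\
      forall h' : hom A E, cmp ev (fprod h' (idc B)) = g -> h' = h.

Definition HasExp (C : Cat) : Prop :=
  forall B D : ob C, exists (E : ob C) (ev : hom (prd E B) D), IsExp B D E ev.

(* fphi A B is (the inverse of) the canonical comparison
   <F p1, F p2> : F(A x B) -> FA x FB. *)
Record Fun (C D : Cat) := {
  fob : ob C -> ob D;
  fmap : forall A B, @hom C A B -> @hom D (fob A) (fob B);
  fphi : forall A B, @hom D (prd (fob A) (fob B)) (fob (prd A B))
}.
Arguments fob {C D} _ _.
Arguments fmap {C D} _ {A B} _.
Arguments fphi {C D} _ A B.

Definition IsFPFun {C D : Cat} (F : Fun C D) : Prop :=
  (forall A, fmap F (idc A) = idc (fob F A)) /\
  (forall A B E (f : hom A B) (g : hom B E),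
      fmap F (cmp g f) = cmp (fmap F g) (fmap F f)) /\
  (forall X (f g : hom X (fob F one)), f = g) /\
  (forall X, exists f : hom X (fob F one), True) /\
  (forall A B, cmp (pr (fmap F (@p1 C A B)) (fmap F (@p2 C A B))) (fphi F A B)
               = idc _) /\
  (forall A B, cmp (fphi F A B) (pr (fmap F (@p1 C A B)) (fmap F (@p2 C A B)))
               = idc _).

Definition PresExp {C D : Cat} (F : Fun C D) : Prop :=
  forall (B E' E : ob C) (ev : hom (prd E B) E'),
    IsExp B E' E ev ->
    IsExp (fob F B) (fob F E') (fob F E) (cmp (fmap F ev) (fphi F E B)).

Definition IdFun (C : Cat) : Fun C C :=
  {| fob := fun A => A; fmap := fun A B f => f;
     fphi := fun A B => idc (prd A B) |}.

(* The fibres are preordered types; the poset P(A) is their poset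
   reflection, so equality in P(A) is [eqv] below. *)
Record Doc (C : Cat) := {
  car : ob C -> Type;
  le : forall A, car A -> car A -> Prop;
  reix : forall A B, @hom C A B -> car B -> car A
}.
Arguments car {C} _ _.
Arguments le {C} _ {A} _ _.
Arguments reix {C} _ {A B} _ _.

Definition eqv {C} (P : Doc C) {A} (x y : car P A) : Prop :=
  le P x y /\ le P y x.

Definition IsDoctrine {C} (P : Doc C) : Prop :=
  (forall A (x : car P A), le P x x) /\
  (forall A (x y z : car P A), le P x y -> le P y z -> le P x z) /\
  (forall A B (f : hom A B) (x y : car P B),
      le P x y -> le P (reix P f x) (reix P f y)) /\
  (forall A (x : car P A), eqv P (reix P (idc A) x) x) /\
  (forall A B E (f : hom A B) (g : hom B E) (x : car P E),
      eqv P (reix P (cmp g f) x) (reix P f (reix P g x))).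

Definition IsRAll {C} (P : Doc C) (A B : ob C) (g : car P (prd A B) -> car P A)
  : Prop :=
  forall (a : car P A) (x : car P (prd A B)),
    le P (reix P p1 a) x <-> le P a (g x).

(* Universal: right adjoints along all projections, with Beck-Chevalley
   for the pullback of pr_A along f : A' -> A (namely pr_A', f x 1_B). *)
Definition Universal {C} (P : Doc C) : Prop :=
  (forall A B, exists g, IsRAll P A B g) /\
  (forall A A' B (f : hom A' A) g g',
      IsRAll P A B g -> IsRAll P A' B g' ->
      forall x : car P (prd A B),
        eqv P (g' (reix P (fprod f (idc B)) x)) (reix P f (g x))).

Record Mor {C D : Cat} (P : Doc C) (R : Doc D) := {
  mF : Fun C D;
  mb : forall A, car P A -> car R (fob mF A)
}.
Arguments mF {C D P R} _.
Arguments mb {C D P R} _ {A} _.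

Definition IsSDMor {C D} {P : Doc C} {R : Doc D} (m : Mor P R) : Prop :=
  IsFPFun (mF m) /\
  (forall A (x y : car P A), le P x y -> le R (mb m x) (mb m y)) /\
  (forall A B (f : hom A B) (x : car P B),
      eqv R (mb m (reix P f x)) (reix R (fmap (mF m) f) (mb m x))).

Definition IsUDMor {C D} {P : Doc C} {R : Doc D} (m : Mor P R) : Prop :=
  IsSDMor m /\ PresExp (mF m) /\
  (forall A B g g',
      IsRAll P A B g -> IsRAll R (fob (mF m) A) (fob (mF m) B) g' ->
      forall x : car P (prd A B),
        eqv R (mb m (g x)) (g' (reix R (fphi (mF m) A B) (mb m x)))).

Definition Pex {C : Cat} (P : Doc C) : Doc C :=
  {| car := fun A => { B : ob C & car P (prd A B) };
     le := fun A u v =>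
       exists f : hom (prd A (projT1 u)) (projT1 v),
         le P (projT2 u) (reix P (pr p1 f) (projT2 v));
     reix := fun A A' f u =>
       existT _ (projT1 u) (reix P (fprod f (idc (projT1 u))) (projT2 u)) |}.

Definition MorEx {C D} {P : Doc C} {R : Doc D} (m : Mor P R)
  : Mor (Pex P) (Pex R) :=
  @Build_Mor _ _ (Pex P) (Pex R) (mF m)
     (fun A (u : car (Pex P) A) =>
       existT (fun B' => car R (prd (fob (mF m) A) B'))
         (fob (mF m) (projT1 u))
         (reix R (fphi (mF m) A (projT1 u)) (mb m (projT2 u)))).

Definition exUnit {C} (P : Doc C) : Mor P (Pex P) :=
  @Build_Mor _ _ P (Pex P) (IdFun C)
     (fun A a =>
       existT (fun B => car P (prd A B)) one (reix P p1 a)).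

(* a : A x (B x D) -> (A x B) x D *)
Definition assocr {C : Cat} (A B D : ob C)
  : hom (prd A (prd B D)) (prd (prd A B) D) :=
  pr (pr p1 (cmp p1 p2)) (cmp p2 p2).

(* multiplication component: (A, B, x) |-> exists^ex_{pr_A} x, where for
   x = (A x B, D, gamma) one has exists^ex_{pr_A} x = (A, B x D, P_a gamma). *)
Definition exMult {C} (P : Doc C) : Mor (Pex (Pex P)) (Pex P) :=
  @Build_Mor _ _ (Pex (Pex P)) (Pex P) (IdFun C)
     (fun A (u : car (Pex (Pex P)) A) =>
       existT (fun B => car P (prd A B))
         (prd (projT1 u) (projT1 (projT2 u)))
         (reix P (assocr A (projT1 u) (projT1 (projT2 u)))
            (projT2 (projT2 u)))).

(* Main.v *)
Require Import Defs.
From Stdlib Require Import Setoid Morphisms ClassicalEpsilon.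

Section Cart.
Context {C : Cat} (HC : IsCartCat C).
Lemma cl {A B : ob C} (f : hom A B) : cmp (idc B) f = f. Proof. apply HC. Qed.
Lemma cr {A B : ob C} (f : hom A B) : cmp f (idc A) = f. Proof. apply HC. Qed.
Lemma ca {A B D E : ob C} (f : hom A B) (g : hom B D) (h : hom D E) :
  cmp h (cmp g f) = cmp (cmp h g) f. Proof. apply HC. Qed.
Lemma cbang {A : ob C} (f : hom A one) : f = bang A. Proof. apply HC. Qed.
Lemma p1pr {X A B : ob C} (f : hom X A) (g : hom X B) : cmp p1 (pr f g) = f. Proof. apply HC. Qed.
Lemma p2pr {X A B : ob C} (f : hom X A) (g : hom X B) : cmp p2 (pr f g) = g. Proof. apply HC. Qed.
Lemma eta {X A B : ob C} (h : hom X (prd A B)) : h = pr (cmp p1 h) (cmp p2 h). Proof. apply HC. Qed.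
Lemma preta {X A B : ob C} (h : hom X (prd A B)) : pr (cmp p1 h) (cmp p2 h) = h.
Proof. symmetry; apply eta. Qed.
Lemma prc {Y X A B : ob C} (f : hom X A) (g : hom X B) (h : hom Y X) :
  cmp (pr f g) h = pr (cmp f h) (cmp g h).
Proof. rewrite (eta (cmp (pr f g) h)), !ca, p1pr, p2pr. reflexivity. Qed.
Lemma prid {A B : ob C} : pr (@p1 C A B) p2 = idc _.
Proof. rewrite (eta (idc _)), !cr. reflexivity. Qed.
Lemma hom_ext {X A B : ob C} (f g : hom X (prd A B)) :
  cmp p1 f = cmp p1 g -> cmp p2 f = cmp p2 g -> f = g.
Proof. intros H1 H2. rewrite (eta f), (eta g), H1, H2. reflexivity. Qed.
Lemma one_ext {X : ob C} (f g : hom X one) : f = g.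
Proof. rewrite (cbang f), (cbang g). reflexivity. Qed.
Lemma bangc {X Y : ob C} (f : hom X Y) : cmp (bang Y) f = bang X.
Proof. apply cbang. Qed.
End Cart.

Ltac cnorm HC := repeat progress (unfold fprod in *;
  rewrite ?(cl HC), ?(cr HC), ?(prc HC), ?(p1pr HC), ?(p2pr HC), ?(prid HC), ?(preta HC), ?(bangc HC);
  rewrite <- ?(ca HC)).
Ltac cat HC := unfold fprod; repeat (apply (hom_ext HC)); try apply (one_ext HC); cnorm HC; try reflexivity.

Lemma t1 C (HC : IsCartCat C) (A B D E: ob C) (f : hom (prd A B) D) (h : hom E A) :
  cmp (pr (@p1 C A B) f) (fprod h (idc B)) = pr (cmp h p1) (cmp f (fprod h (idc B))).
Proof. cat HC. Qed.
Existing Class IsDoctrine.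
Section D.
Context {C : Cat} (P : Doc C) {HP : IsDoctrine P}.
Lemma lrefl {A} (x : car P A) : le P x x. Proof. apply HP. Qed.
Lemma ltrans {A} (x y z : car P A) : le P x y -> le P y z -> le P x z. Proof. apply HP. Qed.
Lemma rmono {A B} (f : hom A B) x y : le P x y -> le P (reix P f x) (reix P f y). Proof. apply HP. Qed.
Lemma rid {A} (x : car P A) : eqv P (reix P (idc A) x) x. Proof. apply HP. Qed.
Lemma rcomp {A B E} (f : hom A B) (g : hom B E) x : eqv P (reix P f (reix P g x)) (reix P (cmp g f) x).
Proof. destruct (proj2 (proj2 (proj2 (proj2 HP))) A B E f g x); split; auto. Qed.
Lemma rext {A B} (f g : hom A B) x : f = g -> reix P f x = reix P g x.
Proof. intros ->; reflexivity. Qed.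
End D.
Instance eqv_Equiv {C} (P : Doc C) {HP : IsDoctrine P} A : Equivalence (@eqv C P A).
Proof. split; unfold eqv; red; intros. split; apply lrefl; auto. tauto.
 destruct H, H0; split; eapply ltrans; eauto. Qed.
Instance le_Pre {C} (P : Doc C) {HP : IsDoctrine P} A : PreOrder (@le C P A).
Proof. split; red; intros. apply lrefl; auto. eapply ltrans; eauto. Qed.
Instance le_Proper {C} (P : Doc C) {HP : IsDoctrine P} A : Proper (@eqv C P A ==> @eqv C P A ==> iff) (@le C P A).
Proof. intros x x' [] y y' []; split; intros; eapply ltrans; eauto; eapply ltrans; eauto. Qed.
Instance reix_Proper {C} (P : Doc C) {HP : IsDoctrine P} A B f : Proper (@eqv C P B ==> @eqv C P A) (@reix C P A B f).
Proof. intros x y []; split; apply rmono; auto. Qed.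
Instance reix_Proper_le {C} (P : Doc C) {HP : IsDoctrine P} A B f : Proper (@le C P B ==> @le C P A) (@reix C P A B f).
Proof. intros x y ?; apply rmono; auto. Qed.
Lemma eqv_le {C} (P : Doc C) A (x y : car P A) : eqv P x y -> le P x y.
Proof. intros []; auto. Qed.

Section PexDoc.
Context {C : Cat} (HC : IsCartCat C) (P : Doc C) {HP : IsDoctrine P}.

Lemma lift_le {A B} (a b : car P (prd A B)) : le P a b -> le (Pex P) (existT _ B a) (existT _ B b).
Proof. intro H. exists p2. simpl. rewrite (prid HC), (rid P); auto. Qed.
Lemma lift_eqv {A B} (a b : car P (prd A B)) : eqv P a b -> eqv (Pex P) (existT _ B a) (existT _ B b).
Proof. intros []; split; apply lift_le; auto. Qed.

Lemma Pex_doc : IsDoctrine (Pex P).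
Proof.
  assert (R : forall A (x : car (Pex P) A), le (Pex P) x x).
  { intros A [B a]. apply lift_le. reflexivity. }
  split; [exact R|split;[|split;[|split]]].
  - intros A [B a] [B' b] [D d] [f Hf] [g Hg]; simpl in *.
    exists (cmp g (pr p1 f)). rewrite Hf, Hg, (rcomp P).
    erewrite rext; [reflexivity|]. cat HC.
  - intros A A' h [B a] [B' b] [f Hf]; simpl in *.
    exists (cmp f (fprod h (idc B))). rewrite Hf, !(rcomp P).
    erewrite rext; [reflexivity|]. cat HC.
  - intros A [B a]. simpl. apply lift_eqv. erewrite rext. apply (rid P).
    cat HC.
  - intros A A' A'' f g [B a]. simpl. apply lift_eqv. rewrite (rcomp P). erewrite rext; [reflexivity|].
    cat HC.
Qed.
End PexDoc.

Lemma radj_counit {C} (HC : IsCartCat C) (Q : Doc C) {HQ : IsDoctrine Q} A B g (H : IsRAll Q A B g) y :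
  le Q (reix Q p1 (g y)) y.
Proof. apply H. reflexivity. Qed.
Lemma radj_mono {C} (HC : IsCartCat C) (Q : Doc C) {HQ : IsDoctrine Q} A B g (H : IsRAll Q A B g) y y' :
  le Q y y' -> le Q (g y) (g y').
Proof. intro. apply H. rewrite (radj_counit HC Q A B g H). auto. Qed.
Lemma radj_eqv {C} (HC : IsCartCat C) (Q : Doc C) {HQ : IsDoctrine Q} A B g (H : IsRAll Q A B g) y y' :
  eqv Q y y' -> eqv Q (g y) (g y').
Proof. intros []; split; eapply radj_mono; eauto. Qed.
Lemma radj_uniq {C} (HC : IsCartCat C) (Q : Doc C) {HQ : IsDoctrine Q} A B g g' :
  IsRAll Q A B g -> IsRAll Q A B g' -> forall y, eqv Q (g y) (g' y).
Proof. intros H H' y. split.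
  apply H'. apply (radj_counit HC Q A B g H). apply H. apply (radj_counit HC Q A B g' H'). Qed.

Ltac cnormH HC H := repeat progress (unfold fprod in H;
  rewrite ?(cl HC), ?(cr HC), ?(prc HC), ?(p1pr HC), ?(p2pr HC), ?(prid HC), ?(preta HC), ?(bangc HC) in H;
  rewrite <- ?(ca HC) in H).

Definition swp {C : Cat} (A X Y : ob C) : hom (prd (prd A X) Y) (prd (prd A Y) X) :=
  pr (pr (cmp p1 p1) p2) (cmp p2 p1).

Section Gc.
Context {C : Cat} (HC : IsCartCat C) (Q : Doc C) {HQ : IsDoctrine Q} (B : ob C)
  (exE : ob C -> ob C) (exev : forall D, hom (prd (exE D) B) D)
  (Hexp : forall D, IsExp B D (exE D) (exev D))
  (allQ : forall X, car Q (prd X B) -> car Q X)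
  (Hall : forall X, IsRAll Q X B (allQ X))
  (Hbc : forall X X' (f : hom X' X) y,
     eqv Q (allQ X' (reix Q (fprod f (idc B)) y)) (reix Q f (allQ X y))).

Definition kmap (A D : ob C) : hom (prd (prd A (exE D)) B) (prd (prd A B) D) :=
  pr (fprod p1 (idc B)) (cmp (exev D) (fprod p2 (idc B))).

Definition Gc (A : ob C) (u : car (Pex Q) (prd A B)) : car (Pex Q) A :=
  existT _ (exE (projT1 u)) (allQ (prd A (exE (projT1 u))) (reix Q (kmap A (projT1 u)) (projT2 u))).

Lemma Gc_adj A : IsRAll (Pex Q) A B (Gc A).
Proof.
  intros [Cc a] [D c]. simpl. split.
  - intros [f Hf]; simpl in *.
    destruct (Hexp D (prd A Cc) (cmp f (swp A Cc B))) as [h [Hh _]].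
    exists h. rewrite <- Hbc. apply (Hall (prd A Cc)).
    transitivity (reix Q (swp A Cc B) (reix Q (fprod p1 (idc Cc)) a)).
    { rewrite (rcomp Q). erewrite rext; [reflexivity|]. unfold swp; cat HC. }
    rewrite Hf, !(rcomp Q). erewrite rext; [reflexivity|].
    unfold kmap, swp in *. apply (hom_ext HC). cat HC.
    cnormH HC Hh. cnorm HC. rewrite Hh. cat HC.
  - intros [h Hh]; simpl in *.
    exists (cmp (exev D) (cmp (fprod h (idc B)) (swp A B Cc))).
    rewrite <- Hbc in Hh. apply (Hall (prd A Cc)) in Hh.
    transitivity (reix Q (swp A B Cc) (reix Q p1 a)).
    { rewrite (rcomp Q). erewrite rext; [reflexivity|]. unfold swp; cat HC. }
    rewrite Hh, !(rcomp Q). erewrite rext; [reflexivity|].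
    unfold kmap, swp in *. cat HC.
Qed.

Lemma Gc_bc A A' (f : hom A' A) x :
  eqv (Pex Q) (Gc A' (reix (Pex Q) (fprod f (idc B)) x)) (reix (Pex Q) f (Gc A x)).
Proof.
  destruct x as [D c]. unfold Gc; cbn [projT1 projT2 Pex reix]. apply (lift_eqv HC Q). rewrite <- Hbc.
  apply (radj_eqv HC Q _ B _ (Hall _)). rewrite !(rcomp Q). erewrite rext; [reflexivity|].
  unfold kmap; cat HC.
Qed.
End Gc.

Section Choice.
Context {C : Cat} (HE : HasExp C).
Definition exEV (B D : ob C) : {E : ob C & {ev : hom (prd E B) D | IsExp B D E ev}} :=
  let s := constructive_indefinite_description _ (HE B D) in
  existT _ (proj1_sig s) (constructive_indefinite_description _ (proj2_sig s)).
Definition exE (B D : ob C) : ob C := projT1 (exEV B D).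
Definition exev (B D : ob C) : hom (prd (exE B D) B) D := proj1_sig (projT2 (exEV B D)).
Lemma exE_spec B D : IsExp B D (exE B D) (exev B D).
Proof. exact (proj2_sig (projT2 (exEV B D))). Qed.
End Choice.

Section Choice2.
Context {C : Cat} (Q : Doc C) (HU : Universal Q).
Definition allc (B X : ob C) : car Q (prd X B) -> car Q X :=
  proj1_sig (constructive_indefinite_description _ (proj1 HU X B)).
Lemma allc_spec B X : IsRAll Q X B (allc B X).
Proof. unfold allc. exact (proj2_sig (constructive_indefinite_description _ _)). Qed.
Lemma allc_bc B X X' (f : hom X' X) y :
  eqv Q (allc B X' (reix Q (fprod f (idc B)) y)) (reix Q f (allc B X y)).
Proof. apply (proj2 HU) with (g := allc B X); apply allc_spec. Qed.
End Choice2.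

Section PexUniv.
Context {C : Cat} (HC : IsCartCat C) (HE : HasExp C) (P : Doc C) {HP : IsDoctrine P} (HU : Universal P).

Definition GP (B A : ob C) := Gc P B (exE HE B) (exev HE B) (allc P HU B) A.

Lemma GP_adj B A : IsRAll (Pex P) A B (GP B A).
Proof. apply Gc_adj; auto. apply exE_spec. apply allc_spec. apply allc_bc. Qed.
Lemma GP_bc B A A' (f : hom A' A) x :
  eqv (Pex P) (GP B A' (reix (Pex P) (fprod f (idc B)) x)) (reix (Pex P) f (GP B A x)).
Proof. apply Gc_bc; auto. apply allc_spec. apply allc_bc. Qed.

Lemma Pex_univ : Universal (Pex P).
Proof.
  assert (HD := Pex_doc HC P).
  split.
  - intros A B. exists (GP B A). apply GP_adj.
  - intros A A' B f g g' Hg Hg' x.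
    rewrite (radj_uniq HC (Pex P) _ _ _ _ Hg' (GP_adj B A')).
    rewrite (radj_uniq HC (Pex P) _ _ _ _ Hg (GP_adj B A)).
    apply GP_bc.
Qed.
End PexUniv.

Section FunL.
Context {C D : Cat} (HC : IsCartCat C) (HD : IsCartCat D) (F : Fun C D) (HF : IsFPFun F).
Lemma Fid A : fmap F (idc A) = idc (fob F A). Proof. apply HF. Qed.
Lemma Fc {A B E : ob C} (f : hom A B) (g : hom B E) : fmap F (cmp g f) = cmp (fmap F g) (fmap F f).
Proof. apply HF. Qed.
Lemma Fone_ext X (f g : hom X (fob F one)) : f = g. Proof. apply HF. Qed.
Lemma psiphi (A B : ob C) : cmp (pr (fmap F (@p1 C A B)) (fmap F (@p2 C A B))) (fphi F A B) = idc _.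
Proof. apply HF. Qed.
Lemma phipsi (A B : ob C) : cmp (fphi F A B) (pr (fmap F (@p1 C A B)) (fmap F (@p2 C A B))) = idc _.
Proof. apply HF. Qed.
Lemma Fp1phi (A B : ob C) : cmp (fmap F (@p1 C A B)) (fphi F A B) = p1.
Proof. rewrite <- (p1pr HD (fmap F p1) (fmap F p2)), <- (ca HD), psiphi, (cr HD). reflexivity. Qed.
Lemma Fp2phi (A B : ob C) : cmp (fmap F (@p2 C A B)) (fphi F A B) = p2.
Proof. rewrite <- (p2pr HD (fmap F p1) (fmap F p2)), <- (ca HD), psiphi, (cr HD). reflexivity. Qed.
Lemma Fp1phi' (A B : ob C) X (x : hom X _) : cmp (fmap F (@p1 C A B)) (cmp (fphi F A B) x) = cmp p1 x.
Proof. rewrite (ca HD), Fp1phi. reflexivity. Qed.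
Lemma Fp2phi' (A B : ob C) X (x : hom X _) : cmp (fmap F (@p2 C A B)) (cmp (fphi F A B) x) = cmp p2 x.
Proof. rewrite (ca HD), Fp2phi. reflexivity. Qed.
Lemma homF_ext (A B : ob C) X (u v : hom X (fob F (prd A B))) :
  cmp (fmap F p1) u = cmp (fmap F p1) v -> cmp (fmap F p2) u = cmp (fmap F p2) v -> u = v.
Proof. intros H1 H2.
  rewrite <- (cl HD u), <- (cl HD v), <- (phipsi A B), <- !(ca HD), !(prc HD), H1, H2. reflexivity. Qed.
Lemma Fpr (X A B : ob C) (f : hom X A) (g : hom X B) :
  fmap F (pr f g) = cmp (fphi F A B) (pr (fmap F f) (fmap F g)).
Proof. apply homF_ext; rewrite ?Fp1phi', ?Fp2phi', ?(p1pr HD), ?(p2pr HD), <- Fc, ?(p1pr HC), ?(p2pr HC); reflexivity. Qed.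
End FunL.

Ltac cnormF HC HD HF := repeat progress (unfold fprod in *;
  rewrite ?(Fc _ HF), ?(Fid _ HF), ?(Fpr HC HD _ HF), ?(Fp1phi' HD _ HF), ?(Fp2phi' HD _ HF), ?(Fp1phi HD _ HF), ?(Fp2phi HD _ HF),
    ?(cl HC), ?(cr HC), ?(prc HC), ?(p1pr HC), ?(p2pr HC), ?(prid HC), ?(preta HC), ?(bangc HC),
    ?(cl HD), ?(cr HD), ?(prc HD), ?(p1pr HD), ?(p2pr HD), ?(prid HD), ?(preta HD), ?(bangc HD);
  rewrite <- ?(ca HD), <- ?(ca HC)).
Ltac catF HC HD HF := unfold fprod;
  repeat (first [apply (hom_ext HD) | apply (homF_ext HD _ HF)]);
  try apply (one_ext HD); try apply (Fone_ext _ HF); cnormF HC HD HF; try reflexivity.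

Section UDgen.
Context {C D : Cat} (HC : IsCartCat C) (HD : IsCartCat D) (P : Doc C) (R : Doc D)
  {HP : IsDoctrine P} {HR : IsDoctrine R} (m : Mor P R) (Hm : IsSDMor m).

Lemma mb_mono A (x y : car P A) : le P x y -> le R (mb m x) (mb m y).
Proof. apply Hm. Qed.
Lemma mb_eqv A (x y : car P A) : eqv P x y -> eqv R (mb m x) (mb m y).
Proof. intros []; split; apply mb_mono; auto. Qed.
Lemma mb_nat A B (f : hom A B) x : eqv R (mb m (reix P f x)) (reix R (fmap (mF m) f) (mb m x)).
Proof. apply Hm. Qed.

Lemma ud_easy A B g g' (Hg : IsRAll P A B g) (Hg' : IsRAll R (fob (mF m) A) (fob (mF m) B) g') x :
  le R (mb m (g x)) (g' (reix R (fphi (mF m) A B) (mb m x))).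
Proof.
  apply Hg'. transitivity (reix R (fphi (mF m) A B) (reix R (fmap (mF m) p1) (mb m (g x)))).
  { rewrite (rcomp R). erewrite rext; [reflexivity|]. symmetry; apply (Fp1phi HD _ (proj1 Hm)). }
  rewrite <- mb_nat. apply (rmono R). apply mb_mono. apply (radj_counit HC P A B g Hg).
Qed.
End UDgen.

Lemma ud_hard {D : Cat} (R : Doc D) {HR : IsDoctrine R} A B g' (Hg' : IsRAll R A B g') y z :
  (forall a, le R (reix R p1 a) y -> le R a z) -> le R (g' y) z.
Proof. intro H. apply H. apply Hg'. reflexivity. Qed.

Lemma IdFun_FP {C} (HC : IsCartCat C) : IsFPFun (IdFun C).
Proof. unfold IsFPFun; simpl. split;[|split;[|split;[|split;[|split]]]]; intros.
  - reflexivity.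
  - reflexivity.
  - apply (one_ext HC).
  - exists (bang X). auto.
  - rewrite (prid HC), (cr HC). reflexivity.
  - rewrite (prid HC), (cr HC). reflexivity.
Qed.
Lemma IdFun_PE {C} (HC : IsCartCat C) : PresExp (IdFun C).
Proof. intros B E' E ev H. simpl. rewrite (cr HC). exact H. Qed.

Section Unit.
Context {C : Cat} (HC : IsCartCat C) (P : Doc C) {HP : IsDoctrine P} (HU : Universal P).

Lemma unit_SD : IsSDMor (exUnit P).
Proof.
  split; [apply IdFun_FP; auto|split].
  - intros A x y H. simpl. apply (lift_le HC P). apply (rmono P). exact H.
  - intros A B f x. simpl. apply (lift_eqv HC P). rewrite !(rcomp P). erewrite rext; [reflexivity|]. cat HC.
Qed.

Lemma unit_UD : IsUDMor (exUnit P).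
Proof.
  assert (HD := Pex_doc HC P).
  split; [apply unit_SD | split; [apply IdFun_PE; auto|]].
  intros A B g g' Hg Hg' x. split.
  - apply (ud_easy HC HC P (Pex P) (exUnit P) unit_SD); auto.
  - apply (ud_hard (Pex P) _ _ g' Hg'). intros [Cc a] [f Hf]. simpl in *.
    exists (bang _). rewrite (rcomp P). erewrite (rext P (cmp p1 (pr p1 (bang _))) p1); [|cat HC].
    rewrite <- (proj2 HU A (prd A Cc) B p1 g (allc P HU B (prd A Cc)) Hg (allc_spec P HU B _)).
    apply (allc_spec P HU B).
    transitivity (reix P (swp A Cc B) (reix P (fprod p1 (idc Cc)) a)).
    { rewrite (rcomp P). erewrite rext; [reflexivity|]. unfold swp; cat HC. }
    rewrite Hf, !(rcomp P). erewrite rext; [reflexivity|]. unfold swp; cat HC.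
Qed.
End Unit.

Section Mult.
Context {C : Cat} (HC : IsCartCat C) (HE : HasExp C) (P : Doc C) {HP : IsDoctrine P} (HU : Universal P).

Lemma mult_SD : IsSDMor (exMult P).
Proof.
  split; [apply IdFun_FP; auto|split].
  - intros A [B [D c]] [B' [D' d]] [f [g Hg]]. simpl in *.
    exists (pr (cmp f (cmp p1 (assocr A B D))) (cmp g (assocr A B D))).
    rewrite Hg, !(rcomp P). erewrite rext; [reflexivity|]. unfold assocr. cat HC.
  - intros A A' f [B [D c]]. simpl. apply (lift_eqv HC P). rewrite !(rcomp P).
    erewrite rext; [reflexivity|]. unfold assocr. cat HC.
Qed.

Lemma mult_UD : IsUDMor (exMult P).
Proof.
  assert (HD1 := Pex_doc HC P). assert (HD2 := Pex_doc HC (Pex P)).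
  split; [apply mult_SD | split; [apply IdFun_PE; auto|]].
  intros A B g g' Hg Hg' x. split.
  - apply (ud_easy HC HC (Pex (Pex P)) (Pex P) (exMult P) mult_SD); auto.
  - apply (ud_hard (Pex P) _ _ g' Hg'). intros a Ha.
    set (G2 := Gc (Pex P) B (exE HE B) (exev HE B) (GP HE P HU B) A).
    assert (HG2 : IsRAll (Pex (Pex P)) A B G2).
    { exact (Gc_adj HC (Pex P) B (exE HE B) (exev HE B) (exE_spec HE B) (GP HE P HU B) (fun X => GP_adj HC HE P HU B X) (fun X X' f y => GP_bc HC HE P HU B X X' f y) A). }
    transitivity (mb (exMult P) (G2 x)).
    2:{ apply (proj1 (proj2 mult_SD)). apply (radj_uniq HC _ _ _ _ _ HG2 Hg). }
    destruct a as [Cc a]; destruct x as [D [D2 c]].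
    unfold G2, Gc, GP, Gc; cbn [projT1 projT2 exMult mb Pex reix le] in *.
    destruct Ha as [f Hf]. cbn [mF exMult IdFun fob fphi fmap] in *.
    destruct (exE_spec HE B D (prd A Cc) (cmp (cmp p1 f) (swp A Cc B))) as [h1 [Hh1 _]].
    destruct (exE_spec HE B D2 (prd A Cc) (cmp (cmp p2 f) (swp A Cc B))) as [h2 [Hh2 _]].
    exists (pr h1 h2). rewrite (rcomp P).
    rewrite <- (allc_bc P HU B _ (prd A Cc)).
    apply (allc_spec P HU B).
    transitivity (reix P (swp A Cc B) (reix P (fprod p1 (idc Cc)) a)).
    { rewrite (rcomp P). erewrite rext; [reflexivity|]. unfold swp; cat HC. }
    rewrite Hf, !(rcomp P). erewrite rext; [reflexivity|]. unfold swp, assocr, kmap in *.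
    cnormH HC Hh1. cnormH HC Hh2.
    cat HC. all: symmetry; assumption.
Qed.
End Mult.

Section MorExS.
Context {C D : Cat} (HC : IsCartCat C) (HD : IsCartCat D) (HE : HasExp C)
  (P : Doc C) {HP : IsDoctrine P} (HU : Universal P)
  (R : Doc D) {HR : IsDoctrine R} (HUR : Universal R)
  (m : Mor P R) (Hm : IsUDMor m).

Lemma MorEx_SD : IsSDMor (MorEx m).
Proof.
  destruct Hm as [HSD _]. pose proof (proj1 HSD) as HF.
  split; [exact HF|split].
  - intros A [B a] [B' b] [f Hf]. simpl in *.
    exists (cmp (fmap (mF m) f) (fphi (mF m) A B)).
    transitivity (reix R (fphi (mF m) A B) (mb m (reix P (pr p1 f) b))).
    { apply (rmono R). apply (mb_mono P R m HSD). exact Hf. }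
    rewrite (mb_nat P R m HSD), !(rcomp R). erewrite rext; [reflexivity|]. catF HC HD HF.
  - intros A A' h [B a]. simpl. apply (lift_eqv HD R).
    rewrite (mb_nat P R m HSD), !(rcomp R). erewrite rext; [reflexivity|]. catF HC HD HF.
Qed.

Lemma MorEx_UD : IsUDMor (MorEx m).
Proof.
  assert (HD1 := Pex_doc HC P). assert (HD2 := Pex_doc HD R).
  pose proof MorEx_SD as HSDx.
  destruct Hm as [HSD [HPE Hm3]]. pose proof (proj1 HSD) as HF.
  split; [exact HSDx | split; [exact HPE|]].
  intros A B g g' Hg Hg' x. split.
  - apply (ud_easy HC HD (Pex P) (Pex R) (MorEx m) HSDx); auto.
  - apply (ud_hard (Pex R) _ _ g' Hg'). intros a Ha.
    transitivity (mb (MorEx m) (GP HE P HU B A x)).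
    2:{ apply (proj1 (proj2 HSDx)). apply (radj_uniq HC _ _ _ _ _ (GP_adj HC HE P HU B A) Hg). }
    destruct a as [Cc a]; destruct x as [Dd c].
    unfold GP, Gc; cbn [projT1 projT2 MorEx mb mF Pex reix le] in *.
    destruct Ha as [f Hf].
    set (E := exE HE B Dd) in *.
    destruct (HPE B Dd E (exev HE B Dd) (exE_spec HE B Dd) (prd (fob (mF m) A) Cc)
                (cmp f (swp (fob (mF m) A) Cc (fob (mF m) B)))) as [h [Hh _]].
    exists h.
    rewrite (Hm3 (prd A E) B _ _ (allc_spec P HU B _) (allc_spec R HUR _ _)).
    rewrite (rcomp R).
    rewrite <- (allc_bc R HUR (fob (mF m) B) _ (prd (fob (mF m) A) Cc)).
    apply (allc_spec R HUR).
    rewrite (mb_nat P R m HSD).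
    transitivity (reix R (swp (fob (mF m) A) Cc (fob (mF m) B)) (reix R (fprod p1 (idc Cc)) a)).
    { rewrite (rcomp R). erewrite rext; [reflexivity|]. unfold swp; cat HD. }
    rewrite Hf, !(rcomp R). erewrite rext; [reflexivity|].
    unfold swp, kmap in *. cnormH HD Hh.
    catF HC HD HF. all: symmetry; exact Hh.
Qed.
End MorExS.

Theorem theorem7 :
  (* T^ex sends objects of UD^exp to objects of UD^exp *)
  (forall (C : Cat) (P : Doc C),
     IsCartCat C -> HasExp C -> IsDoctrine P -> Universal P ->
     IsDoctrine (Pex P) /\ Universal (Pex P)) /\
  (* T^ex sends 1-cells of UD^exp to 1-cells of UD^exp *)
  (forall (C D : Cat) (P : Doc C) (R : Doc D) (m : Mor P R),
     IsCartCat C -> HasExp C -> IsDoctrine P -> Universal P ->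
     IsCartCat D -> HasExp D -> IsDoctrine R -> Universal R ->
     IsUDMor m -> IsUDMor (MorEx m)) /\
  (* unit and multiplication components at objects of UD^exp are 1-cells of UD^exp *)
  (forall (C : Cat) (P : Doc C),
     IsCartCat C -> HasExp C -> IsDoctrine P -> Universal P ->
     IsUDMor (exUnit P) /\ IsUDMor (exMult P)).
Proof.
  split; [|split].
  - intros C P HC HE HP HU. split. apply (Pex_doc HC P). apply (Pex_univ HC HE P HU).
  - intros C D P R m HC HE HP HU HD HED HR HUR Hm.
    apply (MorEx_UD HC HD HE P HU R HUR m Hm).
  - intros C P HC HE HP HU. split. apply (unit_UD HC P HU). apply (mult_UD HC HE P HU).
Qed.
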